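(* Let $(X, Y, f, g)$ be a min-max Stackelberg game satisfying the Standing Assumption below. Suppose the outer player plays a sequence of strategies $x^{(1)}, \dots, x^{(T)} \in X$, and suppose that after $T$ iterations the outer player's asymmetric regret is at most $\varepsilon$: $$\max_{x \in X}\left[\frac{1}{T}\sum_{t=1}^T V(x^{(t)}) - \frac{1}{T}\sum_{t=1}^T V(x)\right] \le \varepsilon .$$ Let $\bar{x}^{(T)} = \frac{1}{T}\sum_{t=1}^T x^{(t)}$ and let $y^*(\bar{x}^{(T)}) \in \arg\max_{y \in Y : g(\bar{x}^{(T)}, y) \ge 0} f(\bar{x}^{(T)}, y)$. Then $(\bar{x}^{(T)}, y^*(\bar{x}^{(T)}))$ is an $(\varepsilon, 0)$-Stackelberg equilibrium.
   Context: A min-max Stackelberg game $(X, Y, f, g)$ consists of non-empty compact convex sets $X \subset \mathbb{R}^n$, $Y \subset \mathbb{R}^m$, a continuous objective $f: X \times Y \to \mathbb{R}$, and continuous constraint functions $g = (g_1, \dots, g_K)$, $g_k : X \times Y \to \mathbb{R}$; the game is $\min_{x \in X} \max_{y \in Y : g(x,y) \ge 0} f(x,y)$ (inequalities componentwise). The outer player's value function is $V(x) = \max_{y \in Y : g(x,y) \ge 0} f(x,y)$. A strategy profile $(x^*, y^* ) \in X \times Y$ with $g(x^*, y^* ) \ge 0$ is an $(\epsilon, \delta)$-Stackelberg equilibrium if $\max_{y \in Y : g(x^*, y) \ge 0} f(x^*, y) - \delta \le f(x^*, y^* ) \le \min_{x \in X} \max_{y \in Y : g(x,y) \ge 0} f(x,y)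 + \epsilon$. Standing Assumption: (1) (Slater) for every $x \in X$ there is $\hat y \in Y$ with $g_k(x, \hat y) > 0$ for all $k$; (2) $\nabla_x f, \nabla_x g_1, \dots, \nabla_x g_K$ exist and are continuous; (3a) $f$ is continuous, convex in $x$ and concave in $y$; (3b) for each $k$, the map $(\mu, x, y) \mapsto \mu g_k(x,y)$ is continuous, convex in $(\mu, x)$ over $\mathbb{R}_+ \times X$ for every $y \in Y$, and concave in $y$ over $Y$ for every $(\mu, x) \in \mathbb{R}_+ \times X$. *)

(* Defs.v *)
From HB Require Import structures.
From mathcomp Require Import all_boot all_order all_algebra.
From mathcomp Require Import all_classical all_reals all_analysis.
Set Implicit Arguments. Unset Strict Implicit. Unset Printing Implicit Defensive.
Import Order.TTheory GRing.Theory Num.Theory.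
Import numFieldNormedType.Exports.
Local Open Scope classical_set_scope.
Local Open Scope ring_scope.

Definition cvx_set (R : realType) (n : nat) (A : set 'rV[R]_n) :=
  forall x y (t : R), A x -> A y -> 0 <= t -> t <= 1 -> A (t *: x + (1 - t) *: y).

Definition feas (R : realType) (n m K : nat) (Y : set 'rV[R]_m)
  (g : 'I_K -> 'rV[R]_n -> 'rV[R]_m -> R) (x : 'rV[R]_n) : set 'rV[R]_m :=
  [set y | Y y /\ forall k, 0 <= g k x y].

Definition valueV (R : realType) (n m K : nat) (Y : set 'rV[R]_m)
  (f : 'rV[R]_n -> 'rV[R]_m -> R) (g : 'I_K -> 'rV[R]_n -> 'rV[R]_m -> R)
  (x : 'rV[R]_n) : R :=
  sup [set f x y | y in feas Y g x].

Definition stackelberg_eq (R : realType) (n m K : nat) (X : set 'rV[R]_n)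
  (Y : set 'rV[R]_m) (f : 'rV[R]_n -> 'rV[R]_m -> R)
  (g : 'I_K -> 'rV[R]_n -> 'rV[R]_m -> R) (eps delta : R)
  (xs : 'rV[R]_n) (ys : 'rV[R]_m) : Prop :=
  [/\ X xs, Y ys, (forall k, 0 <= g k xs ys),
      valueV Y f g xs - delta <= f xs ys
    & f xs ys <= inf [set valueV Y f g x | x in X] + eps].

Definition dotv (R : realType) (n : nat) (u v : 'rV[R]_n) : R :=
  \sum_(i < n) u ord0 i * v ord0 i.

(* "grad_x h exists and is continuous on X x Y": h(., y) is differentiable at
   every x (for (x,y) in X x Y) with differential h' |-> <G x y, h'>, and the
   gradient map G is continuous on X x Y. *)
Definition grad_x_cont (R : realType) (n m : nat) (X : set 'rV[R]_n)
  (Y : set 'rV[R]_m) (h : 'rV[R]_n -> 'rV[R]_m -> R) : Prop :=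
  exists G : 'rV[R]_n -> 'rV[R]_m -> 'rV[R]_n,
    {within X `*` Y, continuous (fun p => G p.1 p.2)} /\
    forall x y, X x -> Y y ->
      differentiable (fun x' => h x' y) x /\
      forall v, 'd (fun x' => h x' y) x v = dotv (G x y) v.

Definition standing_assumption (R : realType) (n m K : nat) (X : set 'rV[R]_n)
  (Y : set 'rV[R]_m) (f : 'rV[R]_n -> 'rV[R]_m -> R)
  (g : 'I_K -> 'rV[R]_n -> 'rV[R]_m -> R) : Prop :=
  [/\
      (forall x, X x -> exists2 y, Y y & forall k, 0 < g k x y),
      grad_x_cont X Y f /\ (forall k, grad_x_cont X Y (g k)),
      [/\ {within X `*` Y, continuous (fun p => f p.1 p.2)},
          (forall y, Y y -> forall x1 x2 (t : R), X x1 -> X x2 -> 0 <= t -> t <= 1 ->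
             f (t *: x1 + (1 - t) *: x2) y <= t * f x1 y + (1 - t) * f x2 y) &
          (forall x, X x -> forall y1 y2 (t : R), Y y1 -> Y y2 -> 0 <= t -> t <= 1 ->
             t * f x y1 + (1 - t) * f x y2 <= f x (t *: y1 + (1 - t) *: y2))] &
      forall k,
      [/\ {within [set p : R * ('rV[R]_n * 'rV[R]_m) | 0 <= p.1 /\ X p.2.1 /\ Y p.2.2],
            continuous (fun p => p.1 * g k p.2.1 p.2.2)},
          (forall y, Y y -> forall (mu1 mu2 : R) x1 x2 (t : R), 0 <= mu1 -> 0 <= mu2 ->
             X x1 -> X x2 -> 0 <= t -> t <= 1 ->
             (t * mu1 + (1 - t) * mu2) * g k (t *: x1 + (1 - t) *: x2) y
               <= t * (mu1 * g k x1 y) + (1 - t) * (mu2 * g k x2 y)) &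
          (forall (mu : R) x, 0 <= mu -> X x -> forall y1 y2 (t : R), Y y1 -> Y y2 ->
             0 <= t -> t <= 1 ->
             t * (mu * g k x y1) + (1 - t) * (mu * g k x y2)
               <= mu * g k x (t *: y1 + (1 - t) *: y2))]].

(* Main.v *)
Require Import Defs.
From HB Require Import structures.
From mathcomp Require Import all_boot all_order all_algebra.
From mathcomp Require Import all_classical all_reals all_analysis.
From mathcomp Require Import ring lra.
Import Order.TTheory GRing.Theory Num.Theory.
Import numFieldNormedType.Exports.
Local Open Scope classical_set_scope.
Local Open Scope ring_scope.

Lemma avg_prop (R : realType) (n : nat) (A : set 'rV[R]_n) (phi psi : 'rV[R]_n -> R) :
  cvx_set A ->
  (forall x1 x2 (t : R), A x1 -> A x2 -> 0 <= t -> t <= 1 ->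
     phi (t *: x1 + (1 - t) *: x2) <= t * phi x1 + (1 - t) * phi x2) ->
  (forall x1 x2 (t : R), A x1 -> A x2 -> 0 < t -> t < 1 ->
     psi (t *: x1 + (1 - t) *: x2) <= psi x1 /\ psi (t *: x1 + (1 - t) *: x2) <= psi x2) ->
  forall k (p : 'I_k.+1 -> 'rV[R]_n), (forall i, A (p i)) ->
  [/\ A (k.+1%:R^-1 *: \sum_(i < k.+1) p i),
      phi (k.+1%:R^-1 *: \sum_(i < k.+1) p i) <= k.+1%:R^-1 * \sum_(i < k.+1) phi (p i) &
      forall i, psi (k.+1%:R^-1 *: \sum_(i < k.+1) p i) <= psi (p i)].
Proof.
move=> hA hphi hpsi; elim=> [|k IH] p hp.
  rewrite !big_ord_recr !big_ord0 /= !add0r invr1 scale1r mul1r.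
  split=> //.
  by move=> i; have -> : i = ord_max by apply: val_inj; case: i => [[]].
have [IA Iphi Ipsi] := IH (fun i => p (widen_ord (leqnSn _) i)) (fun i => hp _).
set c' := (k.+1%:R^-1 *: _) in IA Iphi Ipsi.
have aux : forall N : R, N != 0 -> N + 1 != 0 -> (N + 1)^-1 = (1 - (N + 1)^-1) / N.
  by move=> N h1 h2; field; rewrite h1 h2.
have eN : k.+2%:R = k.+1%:R + 1 :> R by rewrite -addn1 natrD.
have N0 : k.+1%:R != 0 :> R by rewrite pnatr_eq0.
have N1 : k.+1%:R + 1 != 0 :> R by rewrite -eN pnatr_eq0.
set t : R := k.+2%:R^-1.
have t0 : 0 < t by rewrite /t invr_gt0 ltr0n.
have t1 : t < 1 by rewrite /t invf_lt1 // ?ltr0n // ltr1n.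
have ceq : k.+2%:R^-1 *: \sum_(i < k.+2) p i = t *: p ord_max + (1 - t) *: c'.
  rewrite big_ord_recr /= /c' scalerA scalerDr addrC; congr (_ + _).
  congr (_ *: _); rewrite /t eN; exact: aux.
rewrite ceq; split.
- by apply: hA => //; [exact: ltW | exact: ltW].
- apply: le_trans (hphi _ _ _ (hp _) IA (ltW t0) (ltW t1)) _.
  rewrite big_ord_recr /= mulrDr addrC lerD //.
  have ht : t = (1 - t) / k.+1%:R by rewrite /t eN; exact: aux.
  apply: le_trans (ler_wpM2l _ Iphi) _; first by rewrite subr_ge0 ltW.
  by rewrite mulrA -ht.
- have [h1 h2] := hpsi _ _ _ (hp ord_max) IA t0 t1.
  move=> i; case: (unliftP ord_max i) => [j ->|->] //.
  apply: le_trans h2 _.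
  have := Ipsi j; congr (_ <= psi (p _)); apply: val_inj => /=.
  by rewrite /bump leqNgt ltn_ord.
Qed.
Arguments avg_prop {R n A phi psi}.

Theorem mainTheorem1 (R : realType) (n m K : nat)
  (X : set 'rV[R]_n) (Y : set 'rV[R]_m)
  (f : 'rV[R]_n -> 'rV[R]_m -> R) (g : 'I_K -> 'rV[R]_n -> 'rV[R]_m -> R)
  (hX0 : X !=set0) (hXc : compact X) (hXv : cvx_set X)
  (hY0 : Y !=set0) (hYc : compact Y) (hYv : cvx_set Y)
  (hg : forall k, {within X `*` Y, continuous (fun p => g k p.1 p.2)})
  (hSA : standing_assumption X Y f g)
  (T : nat) (hT : (0 < T)%N) (xs : 'I_T -> 'rV[R]_n) (hxs : forall t, X (xs t))
  (eps : R)
  (hreg : forall x, X x ->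
     T%:R^-1 * (\sum_(t < T) valueV Y f g (xs t)) - T%:R^-1 * (\sum_(t < T) valueV Y f g x)
       <= eps)
  (ystar : 'rV[R]_m)
  (hystar : feas Y g (T%:R^-1 *: \sum_(t < T) xs t) ystar /\
     forall y, feas Y g (T%:R^-1 *: \sum_(t < T) xs t) y ->
       f (T%:R^-1 *: \sum_(t < T) xs t) y <= f (T%:R^-1 *: \sum_(t < T) xs t) ystar) :
  stackelberg_eq X Y f g eps 0 (T%:R^-1 *: \sum_(t < T) xs t) ystar.
Proof.
case: T hT xs hxs hreg hystar => // T _ xs hxs hreg hystar.
set xb := (T.+1%:R^-1 *: _) in hystar *.
case: hSA => _ _ [fcont fconv _] hg3.
have mono k y : Y y -> forall x1 x2 (t : R), X x1 -> X x2 -> 0 < t -> t < 1 ->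
    g k (t *: x1 + (1 - t) *: x2) y <= g k x1 y /\
    g k (t *: x1 + (1 - t) *: x2) y <= g k x2 y.
  move=> hy x1 x2 t h1 h2 t0 t1.
  have t0' : 0 < 1 - t by rewrite subr_gt0.
  case: (hg3 k) => _ H _; split.
    have := H y hy 1 0 x1 x2 t ler01 (lexx 0) h1 h2 (ltW t0) (ltW t1).
    by rewrite mulr1 mulr0 addr0 !mul1r mul0r mulr0 addr0 ler_pM2l.
  have := H y hy 0 1 x1 x2 t (lexx 0) ler01 h1 h2 (ltW t0) (ltW t1).
  by rewrite mulr1 mulr0 add0r !mul1r mul0r mulr0 add0r ler_pM2l.
have triv_phi : forall x1 x2 (t : R), X x1 -> X x2 -> 0 <= t -> t <= 1 ->
    (fun _ : 'rV[R]_n => (0 : R)) (t *: x1 + (1 - t) *: x2) <= t * 0 + (1 - t) * 0.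
  by move=> *; rewrite !mulr0 addr0.
have triv_psi : forall x1 x2 (t : R), X x1 -> X x2 -> 0 < t -> t < 1 ->
    (fun _ : 'rV[R]_n => (0 : R)) (t *: x1 + (1 - t) *: x2) <= 0 /\
    (fun _ : 'rV[R]_n => (0 : R)) (t *: x1 + (1 - t) *: x2) <= 0.
  by move=> *; split.
have [XB _ _] := avg_prop hXv triv_phi triv_psi _ _ hxs.
have bnd x : X x -> has_ubound [set f x y | y in feas Y g x].
  move=> hx.
  have cB := continuous_compact fcont (compact_setX hXc hYc).
  have [|_ [M hM]] := compact_has_sup _ cB.
    by case: hY0 => y0 hy0; exists (f x y0); exists (x, y0).
  by exists M => _ [y [hy _] <-]; apply: hM; exists (x, y).
have keyf : forall y, feas Y g xb y ->
    f xb y <= T.+1%:R^-1 * \sum_(t < T.+1) valueV Y f g (xs t).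
  move=> y [hy hgy].
  have feast : forall t, feas Y g (xs t) y.
    move=> t; split=> // k; apply: le_trans (hgy k) _.
    by have [_ _ ->] := avg_prop (phi := fun _ => 0) (psi := fun x => g k x y)
      hXv triv_phi (mono k y hy) _ _ hxs.
  have [_ H _] := avg_prop (phi := fun x => f x y) (psi := fun _ => 0)
    hXv (fconv y hy) triv_psi _ _ hxs.
  apply: le_trans H _; rewrite ler_wpM2l // ?invr_ge0 ?ler0n //.
  apply: ler_sum => t _; rewrite /valueV; apply: (ub_le_sup (bnd _ (hxs t))).
  by exists y.
case: hystar => hfs hmax; have [hy hgy] := hfs.
split => //.
- rewrite subr0; apply: ge_sup; first by exists (f xb ystar); exists ystar.
  by move=> _ [y hyy <-]; exact: hmax.
- rewrite -lerBlDr; apply: lb_le_inf.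
    by case: hX0 => x hx; exists (valueV Y f g x); exists x.
  move=> _ [x hx <-]; have := hreg x hx.
  have -> : T.+1%:R^-1 * \sum_(t < T.+1) valueV Y f g x = valueV Y f g x.
    rewrite sumr_const card_ord -(mulr_natl (valueV Y f g x)) mulrA mulVf ?mul1r // pnatr_eq0.
  move=> h1; have h2 := keyf _ hfs.
  by rewrite lerBlDr; apply: le_trans h2 _; rewrite addrC -lerBlDr.
Qed.
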